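(* Let $m\in\mathbb{N}$, $a,b>0$, let $f=(1,f_1,\ldots,f_{p-1})^T$ be a vector of known regression functions on $\mathbb{R}^k$, let $\beta\in\mathbb{R}^p$ be the unknown parameter, and let $x_1,\ldots,x_m\in\mathbb{R}^k$. Let $\Theta\sim\gamma(a,b)$ (density $\frac{b^a}{\Gamma(a)}\theta^{a-1}e^{-b\theta}$, $\theta>0$) and assume that conditionally on $\Theta=\theta$ the random variables $Y_1,\ldots,Y_m$ are independent with $Y_j$ Poisson distributed with mean $\theta\exp(f(x_j)^T\beta)$. Then the Fisher information matrix of $Y=(Y_1,\ldots,Y_m)$ for $\beta$ is $$I(\beta)=\frac{a}{b}\left(I_{Po}(\beta)-\frac{I_{Po}(\beta)e_1e_1^TI_{Po}(\beta)}{e_1^TI_{Po}(\beta)e_1+b}\right),$$ where $I_{Po}(\beta)=\sum_{j=1}^m\exp\bigl(f(x_j)^T\beta\bigr)f(x_j)f(x_j)^T$ and $e_1$ is the first standard unit vector of $\mathbb{R}^p$.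
   Context: The shape parameter $a$ and rate parameter $b$ are known; only $\beta$ is the parameter of interest. $I_{Po}(\beta)$ is the Fisher information matrix of the Poisson model without random effect. *)

(* Defs.v *)
From Stdlib Require Import Reals List Arith.
From Coquelicot Require Import Coquelicot.
Open Scope R_scope.

Definition Rk (k : nat) : Type := {i : nat | (i < k)%nat} -> R.

Definition fsum (n : nat) (F : nat -> R) : R :=
  fold_right Rplus 0 (map F (seq 0 n)).
Definition fprod (n : nat) (F : nat -> R) : R :=
  fold_right Rmult 1 (map F (seq 0 n)).

Definition dotp (p : nat) (u v : nat -> R) : R := fsum p (fun i => u i * v i).

Definition int0inf (g : R -> R) : R :=
  RInt_gen g (at_right 0) (Rbar_locally p_infty).

Definition Gamma_fn (a : R) : R := int0inf (fun t => Rpower t (a - 1) * exp (- t)).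

Definition gamma_dens (a b th : R) : R :=
  Rpower b a / Gamma_fn a * Rpower th (a - 1) * exp (- b * th).

Definition pois_pmf (mu : R) (y : nat) : R := exp (- mu) * mu ^ y / INR (fact y).

(* Marginal pmf of Y = (Y_1,...,Y_m) (y given as list, y_j = nth (j-1) y 0):
   int_0^oo gamma_dens(theta) prod_j Pois(y_j ; theta exp(f(x_j)^T beta)) dtheta. *)
Definition mixed_pmf (k p m : nat) (a b : R) (f : Rk k -> nat -> R)
    (x : nat -> Rk k) (beta : nat -> R) (y : list nat) : R :=
  int0inf (fun th => gamma_dens a b th *
    fprod m (fun j => pois_pmf (th * exp (dotp p (f (x j)) beta)) (nth j y 0%nat))).

Definition shift (i : nat) (t : R) (beta : nat -> R) : nat -> R :=
  fun l => if Nat.eqb l i then beta l + t else beta l.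

Definition score (k p m : nat) (a b : R) (f : Rk k -> nat -> R)
    (x : nat -> Rk k) (beta : nat -> R) (i : nat) (y : list nat) : R :=
  Derive (fun t => ln (mixed_pmf k p m a b f x (shift i t beta) y)) 0.

(* Iterated sum over y in N^m (lists of length m): is_msum m F l means the
   iterated series sum_{y_1} ... sum_{y_m} F (y_1 :: ... :: y_m :: nil)
   converges (each inner series converging) with value l. *)
Fixpoint is_msum (m : nat) (F : list nat -> R) (l : R) : Prop :=
  match m with
  | O => F nil = l
  | S m' => exists g : nat -> R,
      (forall n, is_msum m' (fun ys => F (n :: ys)) (g n)) /\ is_series g l
  end.

Definition I_Po (k p m : nat) (f : Rk k -> nat -> R) (x : nat -> Rk k)
    (beta : nat -> R) (i l : nat) : R :=
  fsum m (fun j => exp (dotp p (f (x j)) beta) * f (x j) i * f (x j) l).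

(* Main.v *)
Require Import Defs.
From Stdlib Require Import Reals List Arith Lra Lia Classical.
From Coquelicot Require Import Coquelicot.
Open Scope R_scope.

Lemma fsum_S n F : fsum (S n) F = fsum n F + F n.
Proof.
  unfold fsum. rewrite seq_S, map_app, fold_right_app. simpl.
  generalize (map F (seq 0 n)). intro l. induction l; simpl; lra.
Qed.

Lemma fprod_S n F : fprod (S n) F = fprod n F * F n.
Proof.
  unfold fprod. rewrite seq_S, map_app, fold_right_app. simpl.
  generalize (map F (seq 0 n)). intro l. induction l; simpl. lra. rewrite IHl. ring.
Qed.

Lemma fsum_Sl n F : fsum (S n) F = F 0%nat + fsum n (fun j => F (S j)).
Proof.
  unfold fsum. simpl. f_equal. rewrite <- seq_shift, map_map. reflexivity.
Qed.

Lemma fprod_Sl n F : fprod (S n) F = F 0%nat * fprod n (fun j => F (S j)).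
Proof.
  unfold fprod. simpl. f_equal. rewrite <- seq_shift, map_map. reflexivity.
Qed.

Lemma fsum_0 F : fsum 0 F = 0. Proof. reflexivity. Qed.
Lemma fprod_0 F : fprod 0 F = 1. Proof. reflexivity. Qed.

Lemma fsum_ext_lt n F G : (forall j, (j < n)%nat -> F j = G j) -> fsum n F = fsum n G.
Proof.
  induction n; intros H. reflexivity.
  rewrite !fsum_S, IHn, H; auto.
Qed.

Lemma fprod_ext_lt n F G : (forall j, (j < n)%nat -> F j = G j) -> fprod n F = fprod n G.
Proof.
  induction n; intros H. reflexivity.
  rewrite !fprod_S, IHn, H; auto.
Qed.

Lemma fsum_plus n F G : fsum n (fun j => F j + G j) = fsum n F + fsum n G.
Proof. induction n. simpl. unfold fsum; simpl; lra. rewrite !fsum_S, IHn. ring. Qed.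

Lemma fsum_minus n F G : fsum n (fun j => F j - G j) = fsum n F - fsum n G.
Proof. induction n. unfold fsum; simpl; lra. rewrite !fsum_S, IHn. ring. Qed.

Lemma fsum_scal n c F : fsum n (fun j => c * F j) = c * fsum n F.
Proof. induction n. unfold fsum; simpl; lra. rewrite !fsum_S, IHn. ring. Qed.

Lemma fsum_zero n : fsum n (fun _ => 0) = 0.
Proof. induction n. reflexivity. rewrite fsum_S, IHn. ring. Qed.

Lemma fsum_delta n j F : (j < n)%nat ->
  fsum n (fun l => if Nat.eqb l j then F l else 0) = F j.
Proof.
  induction n; intros H. lia.
  rewrite fsum_S. destruct (Nat.eq_dec j n) as [->|Hne].
  - rewrite Nat.eqb_refl. rewrite (fsum_ext_lt _ _ (fun _ => 0)), fsum_zero. ring.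
    intros l Hl. destruct (Nat.eqb_spec l n). lia. reflexivity.
  - rewrite IHn by lia. destruct (Nat.eqb_spec n j). lia. ring.
Qed.

Lemma fprod_mult n F G : fprod n (fun j => F j * G j) = fprod n F * fprod n G.
Proof. induction n. unfold fprod; simpl; lra. rewrite !fprod_S, IHn. ring. Qed.

Lemma fprod_exp n F : fprod n (fun j => exp (F j)) = exp (fsum n F).
Proof. induction n. unfold fprod, fsum; simpl. rewrite exp_0; auto.
  rewrite fprod_S, fsum_S, IHn, exp_plus. ring. Qed.

Lemma fprod_Rpower n x F : 0 < x -> fprod n (fun j => Rpower x (F j)) = Rpower x (fsum n F).
Proof. intro Hx. induction n. unfold fprod, fsum; simpl. rewrite Rpower_O; auto.
  rewrite fprod_S, fsum_S, IHn, Rpower_plus. ring. Qed.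

Lemma fprod_pos n F : (forall j, (j < n)%nat -> 0 < F j) -> 0 < fprod n F.
Proof. induction n; intros H. unfold fprod; simpl; lra.
  rewrite fprod_S. apply Rmult_lt_0_compat; auto. Qed.

Lemma fsum_pos n F : (forall j, 0 < F j) -> 0 <= fsum n F.
Proof. induction n; intros H. unfold fsum; simpl; lra.
  rewrite fsum_S. specialize (IHn H). specialize (H n). lra. Qed.

Lemma ln_fprod n F : (forall j, (j < n)%nat -> 0 < F j) -> ln (fprod n F) = fsum n (fun j => ln (F j)).
Proof. induction n; intros H. unfold fprod, fsum; simpl. apply ln_1.
  rewrite fprod_S, fsum_S, ln_mult, IHn; auto. apply fprod_pos; auto. Qed.

Lemma fsum_pos' n F : (forall j, 0 <= F j) -> 0 <= fsum n F.
Proof. induction n; intros H. unfold fsum; simpl; lra.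
  rewrite fsum_S. specialize (IHn H). specialize (H n). lra. Qed.

Fixpoint rf (al : R) (n : nat) : R :=
  match n with O => 1 | S n' => rf al n' * (al + INR n') end.

Lemma rf_pos al n : 0 < al -> 0 < rf al n.
Proof. intro H. induction n; simpl. lra. apply Rmult_lt_0_compat; auto. pose proof (pos_INR n); lra. Qed.

Definition ba (al : R) := fun n => rf al n / INR (fact n).

Lemma a_pos al (Hal : 0 < al) n : 0 < (ba al) n.
Proof. unfold ba. apply Rdiv_lt_0_compat. apply rf_pos; auto. apply lt_0_INR, lt_O_fact. Qed.

Lemma a_ratio al (Hal : 0 < al) n : (ba al) (S n) / (ba al) n = (al + INR n) / INR (S n).
Proof.
  unfold ba. simpl rf. change (fact (S n)) with (S n * fact n)%nat. rewrite mult_INR.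
  pose proof (rf_pos al n Hal). assert (0 < INR (fact n)) by (apply lt_0_INR, lt_O_fact).
  assert (0 < INR (S n)) by (apply lt_0_INR; lia).
  field. repeat split; lra.
Qed.

Lemma a_CV al (Hal : 0 < al) : CV_radius (ba al) = 1.
Proof.
  rewrite (CV_radius_finite_DAlembert (ba al) 1).
  - f_equal. apply Rinv_1.
  - intro n. apply Rgt_not_eq, (a_pos al Hal).
  - lra.
  - apply (is_lim_seq_ext (fun n => 1 + (al - 1) * / INR (S n))).
    { intro n. rewrite (a_ratio al Hal). rewrite Rabs_pos_eq. rewrite S_INR. field. pose proof (pos_INR n); lra.
      apply Rdiv_le_0_compat. pose proof (pos_INR n); lra. apply lt_0_INR; lia. }
    replace (Finite 1) with (Finite (1 + (al - 1) * 0)) by (f_equal; ring).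
    apply is_lim_seq_plus'. apply is_lim_seq_const.
    replace (Finite ((al - 1) * 0)) with (Rbar_mult (al - 1) 0) by reflexivity.
    apply is_lim_seq_scal_l.
    replace (Finite 0) with (Rbar_inv p_infty) by reflexivity.
    apply is_lim_seq_inv. apply (is_lim_seq_incr_1 INR). apply is_lim_seq_INR. discriminate.
Qed.

Lemma in_disk al (Hal : 0 < al) z : -1 < z < 1 -> Rbar_lt (Rabs z) (CV_radius (ba al)).
Proof. intro H. rewrite (a_CV al Hal). simpl. apply Rabs_def1; lra. Qed.

Lemma ode al (Hal : 0 < al) z : -1 < z < 1 -> (1 - z) * PSeries (PS_derive (ba al)) z = al * PSeries (ba al) z.
Proof.
  intro Hz. pose proof (in_disk al Hal z Hz) as Hd.
  assert (Hd' : Rbar_lt (Rabs z) (CV_radius (PS_derive (ba al)))) by (rewrite CV_radius_derive; auto).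
  rewrite Rmult_minus_distr_r, Rmult_1_l.
  rewrite <- PSeries_incr_1.
  rewrite <- PSeries_minus.
  2: apply CV_radius_inside; auto.
  2: apply ex_pseries_incr_1, CV_radius_inside; auto.
  rewrite <- PSeries_scal. apply PSeries_ext. intro n.
  unfold PS_minus, PS_scal, PS_incr_1, PS_derive. destruct n as [|n].
  - change (plus (INR 1 * (ba al) 1%nat) (opp zero) = al * (ba al) 0%nat).
    unfold plus, opp, zero; simpl. unfold ba; simpl. field.
  - change (INR (S (S n)) * (ba al) (S (S n)) + - (INR (S n) * (ba al) (S n)) = al * (ba al) (S n)).
    unfold ba. change (rf al (S (S n))) with (rf al (S n) * (al + INR (S n))).
    change (fact (S (S n))) with (S (S n) * fact (S n))%nat. rewrite mult_INR.
    assert (0 < INR (fact (S n))) by (apply lt_0_INR, lt_O_fact).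
    assert (0 < INR (S (S n))) by (apply lt_0_INR; lia).
    rewrite (S_INR (S n)). pose proof (pos_INR (S n)). field. lra.
Qed.

Definition bg (al : R) := fun z => PSeries (ba al) z * exp (al * ln (1 - z)).

Lemma g_deriv al (Hal : 0 < al) z : -1 < z < 1 -> is_derive (bg al) z 0.
Proof.
  intro Hz. pose proof (is_derive_PSeries (ba al) z (in_disk al Hal z Hz)) as H1.
  assert (H2 : is_derive (fun z => exp (al * ln (1 - z))) z (- al / (1 - z) * exp (al * ln (1 - z)))).
  { auto_derive. lra. replace (1 + - z) with (1 - z) by ring. field. lra. }
  pose proof (is_derive_mult _ _ _ _ _ H1 H2 (fun n m => Rmult_comm n m)) as H.
  unfold bg. eapply is_derive_ext; [intro t; reflexivity|].
  replace 0 with (plus (mult (PSeries (PS_derive (ba al)) z) (exp (al * ln (1 - z))))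
                       (mult (PSeries (ba al) z) (- al / (1 - z) * exp (al * ln (1 - z))))).
  exact H.
  change (PSeries (PS_derive (ba al)) z * exp (al * ln (1 - z)) + PSeries (ba al) z * (- al / (1 - z) * exp (al * ln (1 - z))) = 0).
  pose proof (ode al Hal z Hz) as Ho.
  replace (PSeries (PS_derive (ba al)) z) with (al * PSeries (ba al) z / (1 - z)) by (rewrite <- Ho; field; lra).
  field. lra.
Qed.

Lemma binom_main al (Hal : 0 < al) q : 0 <= q < 1 ->
  is_series (fun n => rf al n / INR (fact n) * q ^ n) (Rpower (1 - q) (- al)).
Proof.
  intro Hq.
  assert (Hg : (bg al) q = 1).
  { destruct (MVT_gen (bg al) 0 q (fun _ => 0)) as [c0 [Hc Heq]].
    - intros z Hz. apply (g_deriv al Hal). rewrite Rmin_left, Rmax_right in Hz by lra. lra.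
    - intros z Hz. rewrite Rmin_left, Rmax_right in Hz by lra.
      apply continuity_pt_filterlim. apply (@ex_derive_continuous R_AbsRing R_NormedModule (bg al) z). eexists. apply (g_deriv al Hal). lra.
    - rewrite Rmult_0_l in Heq. unfold bg in Heq |- *. rewrite PSeries_0 in Heq.
      replace (1 - 0) with 1 in Heq by ring. rewrite ln_1, Rmult_0_r, exp_0 in Heq.
      unfold ba in Heq. simpl in Heq. unfold ba. rewrite Rdiv_1, Rmult_1_r in Heq. lra. }
  assert (HP : PSeries (ba al) q = Rpower (1 - q) (- al)).
  { rewrite Rpower_Ropp. unfold Rpower. unfold bg in Hg.
    assert (0 < exp (al * ln (1 - q))) by apply exp_pos.
    apply (Rmult_eq_reg_r (exp (al * ln (1 - q)))). rewrite Hg. field. lra. lra. }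
  rewrite <- HP.
  pose proof (PSeries_correct (ba al) q (CV_radius_inside (ba al) q (in_disk al Hal q ltac:(lra)))) as H.
  revert H. apply is_series_ext. intro n. rewrite pow_n_pow. unfold ba. change (q ^ n * (rf al n / INR (fact n)) = rf al n / INR (fact n) * q ^ n). ring.
Qed.


Lemma binom : forall al q, 0 < al -> 0 <= q < 1 ->
  is_series (fun n => rf al n / INR (fact n) * q ^ n) (Rpower (1 - q) (- al)).
Proof. intros. apply binom_main; auto. Qed.

Lemma exp_le x y : x <= y -> exp x <= exp y.
Proof. intro H. destruct (Rle_lt_or_eq_dec _ _ H). left; apply exp_increasing; auto. subst; lra. Qed.

Lemma pos_filter_lt (P : R -> Prop) : (forall x, 0 < x -> P x) ->
  filter_prod (at_right 0) (Rbar_locally p_infty)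
    (fun ab : R * R => forall x, Rmin (fst ab) (snd ab) < x < Rmax (fst ab) (snd ab) -> P x).
Proof.
  intro HP. apply (Filter_prod _ _ _ (fun x => 0 < x) (fun y => 0 < y)).
  - unfold at_right, within. apply filter_forall. auto.
  - exists 0. auto.
  - intros u v Hu Hv z [Hz _]. simpl in Hz. assert (0 < Rmin u v) by (apply Rmin_glb_lt; auto). apply HP. lra.
Qed.

Lemma pos_filter_le (P : R -> Prop) : (forall x, 0 < x -> P x) ->
  filter_prod (at_right 0) (Rbar_locally p_infty)
    (fun ab : R * R => forall x, Rmin (fst ab) (snd ab) <= x <= Rmax (fst ab) (snd ab) -> P x).
Proof.
  intro HP. apply (Filter_prod _ _ _ (fun x => 0 < x) (fun y => 0 < y)).
  - unfold at_right, within. apply filter_forall. auto.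
  - exists 0. auto.
  - intros u v Hu Hv z [Hz _]. simpl in Hz. assert (0 < Rmin u v) by (apply Rmin_glb_lt; auto). apply HP. lra.
Qed.

Lemma gen_mono (f : R -> R) (K : R) :
  (forall x, 0 < x -> continuous f x) -> (forall x, 0 < x -> 0 <= f x) ->
  (forall x y, 0 < x -> x <= y -> RInt f x y <= K) ->
  exists l, is_RInt_gen f (at_right 0) (Rbar_locally p_infty) l /\ RInt f 1 2 <= l.
Proof.
  intros Hc Hp HK.
  assert (exR : forall x y, 0 < x -> 0 < y -> ex_RInt f x y).
  { intros x y Hx Hy. apply (@ex_RInt_continuous R_CompleteNormedModule). intros z Hz. apply Hc.
    assert (0 < Rmin x y) by (apply Rmin_glb_lt; auto). lra. }
  assert (mono : forall x x0 y0 y, 0 < x -> x <= x0 -> x0 <= y0 -> y0 <= y -> RInt f x0 y0 <= RInt f x y).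
  { intros x x0 y0 y Hx H1 H2 H3.
    rewrite <- (RInt_Chasles f x x0 y) by (apply exR; lra).
    rewrite <- (RInt_Chasles f x0 y0 y) by (apply exR; lra).
    assert (0 <= RInt f x x0) by (apply RInt_ge_0; auto; [apply exR; lra | intros; apply Hp; lra]).
    assert (0 <= RInt f y0 y) by (apply RInt_ge_0; auto; [apply exR; lra | intros; apply Hp; lra]).
    change (RInt f x0 y0 <= RInt f x x0 + (RInt f x0 y0 + RInt f y0 y)). lra. }
  set (E := fun v => exists x y, 0 < x /\ x <= y /\ v = RInt f x y).
  destruct (completeness E) as [l [Hub Hlub]].
  { exists K. intros v [x [y [Hx [Hxy ->]]]]. apply HK; auto. }
  { exists (RInt f 1 1). exists 1, 1. repeat split; lra. }
  exists l. split.
  2:{ apply Hub. exists 1, 2. repeat split; lra. }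
  unfold is_RInt_gen, filterlimi, filter_le, filtermapi.
  intros P [eps HP].
  destruct (classic (exists v, E v /\ l - eps < v)) as [[v [[x0 [y0 [Hx0 [Hxy0 ->]]]] Hv]] | Hn].
  2:{ exfalso. assert (l <= l - eps). { apply Hlub. intros v Ev. apply Rnot_lt_le. intro Hlt. apply Hn. exists v. auto. }
      pose proof (cond_pos eps). lra. }
  apply (Filter_prod _ _ _ (fun x => 0 < x < x0) (fun y => y0 < y)).
  - unfold at_right, within. exists (mkposreal x0 Hx0). intros y Hy Hy0. split; auto.
    change (Rabs (y - 0) < x0) in Hy. rewrite Rminus_0_r, Rabs_pos_eq in Hy; lra.
  - exists y0. auto.
  - intros x y [Hx Hxx] Hy. exists (RInt f x y). split.
    + apply (@RInt_correct R_CompleteNormedModule). apply exR; lra.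
    + apply HP. change (Rabs (RInt f x y - l) < eps).
      assert (RInt f x y <= l) by (apply Hub; exists x, y; repeat split; lra).
      assert (RInt f x0 y0 <= RInt f x y) by (apply mono; lra).
      apply Rabs_def1; lra.
Qed.

Definition gf (c t : R) := Rpower t (c - 1) * exp (- t).

Lemma Rpower_cont d x : 0 < x -> continuous (fun t => Rpower t d) x.
Proof.
  intro Hx. apply (@ex_derive_continuous R_AbsRing R_NormedModule).
  exists (d * Rpower x (d - 1)). apply is_derive_Reals, derivable_pt_lim_power; auto.
Qed.

Lemma gf_cont c x : 0 < x -> continuous (gf c) x.
Proof.
  intro Hx. apply (@ex_derive_continuous R_AbsRing R_NormedModule).
  unfold gf, Rpower. auto_derive. lra.
Qed.

Lemma gf_pos c x : 0 < x -> 0 < gf c x.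
Proof. intro. unfold gf. apply Rmult_lt_0_compat; apply exp_pos. Qed.

Lemma powbound d : exists K0, 0 < K0 /\ forall t, 1 <= t -> Rpower t d <= K0 * exp (t / 2).
Proof.
  set (D := Rabs d + 1). assert (HD : 0 < D) by (unfold D; pose proof (Rabs_pos d); lra).
  exists (exp (D * ln (2 * D) - D)). split. apply exp_pos.
  intros t Ht. apply Rle_trans with (Rpower t D).
  { apply Rle_Rpower; auto. unfold D. pose proof (Rle_abs d). lra. }
  unfold Rpower. rewrite <- exp_plus. apply exp_le.
  assert (H1 := exp_ineq1_le (ln (t / (2 * D)))).
  rewrite exp_ln in H1 by (apply Rdiv_lt_0_compat; lra).
  rewrite ln_div in H1 by lra.
  assert (H2 : D * (1 + (ln t - ln (2 * D))) <= D * (t / (2 * D))) by (apply Rmult_le_compat_l; lra).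
  replace (D * (t / (2 * D))) with (t / 2) in H2 by (field; lra). nra.
Qed.

Lemma RInt_pow_bound c x : 0 < c -> 0 < x <= 1 -> RInt (gf c) x 1 <= 1 / c.
Proof.
  intros Hc Hx.
  assert (HI : is_RInt (fun t => Rpower t (c - 1)) x 1 (minus (Rpower 1 c / c) (Rpower x c / c))).
  { apply (@is_RInt_derive R_CompleteNormedModule (fun t => Rpower t c / c)).
    - intros t Ht. rewrite Rmin_left, Rmax_right in Ht by lra.
      apply is_derive_Reals.
      replace (Rpower t (c - 1)) with (/ c * (c * Rpower t (c - 1))) by (field; lra).
      apply (derivable_pt_lim_ext (fun t => / c * Rpower t c)). intros; unfold Rdiv; ring.
      apply derivable_pt_lim_scal, derivable_pt_lim_power; lra.
    - intros t Ht. rewrite Rmin_left, Rmax_right in Ht by lra. apply Rpower_cont; lra. }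
  apply Rle_trans with (RInt (fun t => Rpower t (c - 1)) x 1).
  - apply RInt_le; try lra.
    + apply (@ex_RInt_continuous R_CompleteNormedModule). intros z Hz. rewrite Rmin_left, Rmax_right in Hz by lra.
      apply gf_cont; lra.
    + eexists; exact HI.
    + intros t Ht. unfold gf. rewrite <- (Rmult_1_r (Rpower t (c - 1))) at 2.
      apply Rmult_le_compat_l. left; apply exp_pos. rewrite <- exp_0. apply exp_le. lra.
  - rewrite (is_RInt_unique _ _ _ _ HI). change (Rpower 1 c / c - Rpower x c / c <= 1 / c).
    unfold Rpower at 1. rewrite ln_1, Rmult_0_r, exp_0.
    assert (0 < Rpower x c) by apply exp_pos. unfold Rdiv.
    assert (0 < / c) by (apply Rinv_0_lt_compat; lra). nra.
Qed.

Lemma RInt_tail_bound c : exists K1, forall y, 1 <= y -> RInt (gf c) 1 y <= K1.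
Proof.
  destruct (powbound (c - 1)) as [K0 [HK0 Hb]].
  exists (2 * K0 * exp (- (1) / 2)). intros y Hy.
  assert (HI : is_RInt (fun t => K0 * exp (- t / 2)) 1 y
     (minus (- 2 * K0 * exp (- y / 2)) (- 2 * K0 * exp (- (1) / 2)))).
  { apply (@is_RInt_derive R_CompleteNormedModule (fun t => - 2 * K0 * exp (- t / 2))).
    - intros t Ht. auto_derive; auto. unfold Rdiv. field.
    - intros t Ht. apply (@ex_derive_continuous R_AbsRing R_NormedModule). auto_derive; auto. }
  apply Rle_trans with (RInt (fun t => K0 * exp (- t / 2)) 1 y).
  - apply RInt_le; auto.
    + apply (@ex_RInt_continuous R_CompleteNormedModule). intros z Hz. rewrite Rmin_left, Rmax_right in Hz by lra.
      apply gf_cont; lra.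
    + eexists; exact HI.
    + intros t Ht. unfold gf.
      replace (K0 * exp (- t / 2)) with (K0 * exp (t / 2) * exp (- t)).
      apply Rmult_le_compat_r. left; apply exp_pos. apply Hb; lra.
      rewrite Rmult_assoc, <- exp_plus. f_equal. f_equal. field.
  - rewrite (is_RInt_unique _ _ _ _ HI). change (- 2 * K0 * exp (- y / 2) - - 2 * K0 * exp (- (1) / 2) <= 2 * K0 * exp (- (1) / 2)).
    assert (0 < exp (- y / 2)) by apply exp_pos. nra.
Qed.

Lemma G1 c : 0 < c -> is_RInt_gen (gf c) (at_right 0) (Rbar_locally p_infty) (Gamma_fn c) /\ 0 < Gamma_fn c.
Proof.
  intro Hc. destruct (RInt_tail_bound c) as [K1 HK1].
  assert (exR : forall x y, 0 < x -> 0 < y -> ex_RInt (gf c) x y).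
  { intros x y Hx Hy. apply (@ex_RInt_continuous R_CompleteNormedModule). intros z Hz. apply gf_cont.
    assert (0 < Rmin x y) by (apply Rmin_glb_lt; auto). lra. }
  destruct (gen_mono (gf c) (1 / c + K1)) as [l [Hl Hl2]].
  - intros; apply gf_cont; auto.
  - intros; left; apply gf_pos; auto.
  - intros x y Hx Hxy.
    set (x' := Rmin x 1). set (y' := Rmax y 1).
    assert (Hx' : 0 < x' <= 1) by (unfold x'; split; [apply Rmin_glb_lt; lra | apply Rmin_r]).
    assert (Hy' : 1 <= y') by (unfold y'; apply Rmax_r).
    assert (RInt (gf c) x y <= RInt (gf c) x' y').
    { assert (x' <= x) by apply Rmin_l. assert (y <= y') by apply Rmax_l.
      rewrite <- (RInt_Chasles (gf c) x' x y') by (apply exR; lra).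
      rewrite <- (RInt_Chasles (gf c) x y y') by (apply exR; lra).
      assert (0 <= RInt (gf c) x' x) by (apply RInt_ge_0; auto; [apply exR; lra | intros; left; apply gf_pos; lra]).
      assert (0 <= RInt (gf c) y y') by (apply RInt_ge_0; auto; [apply exR; lra | intros; left; apply gf_pos; lra]).
      change (RInt (gf c) x y <= RInt (gf c) x' x + (RInt (gf c) x y + RInt (gf c) y y')). lra. }
    rewrite <- (RInt_Chasles (gf c) x' 1 y') in H by (apply exR; lra).
    pose proof (RInt_pow_bound c x' Hc Hx'). pose proof (HK1 y' Hy').
    change (RInt (gf c) x y <= RInt (gf c) x' 1 + RInt (gf c) 1 y') in H. lra.
  - assert (HG : Gamma_fn c = l).
    { unfold Gamma_fn, int0inf. apply is_RInt_gen_unique. exact Hl. }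
    rewrite HG. split; auto.
    assert (0 < RInt (gf c) 1 2).
    { apply RInt_gt_0. lra. intros; apply gf_pos; lra. intros; apply gf_cont; lra. }
    lra.
Qed.

Lemma gen_scale (g : R -> R) L B : 0 < B ->
  is_RInt_gen g (at_right 0) (Rbar_locally p_infty) L ->
  is_RInt_gen (fun t => B * g (B * t)) (at_right 0) (Rbar_locally p_infty) L.
Proof.
  intros HB H. unfold is_RInt_gen, filterlimi, filter_le, filtermapi in *.
  intros P HP. destruct (H P HP) as [Q R HQ HR HQR].
  apply (Filter_prod _ _ _ (fun x => Q (B * x)) (fun y => R (B * y))).
  - destruct HQ as [eps He]. assert (Hpos : 0 < eps / B) by (apply Rdiv_lt_0_compat; [apply cond_pos|auto]).
    exists (mkposreal _ Hpos). intros y Hy Hy0. apply He.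
    + change (Rabs (B * y - 0) < eps). change (Rabs (y - 0) < eps / B) in Hy.
      rewrite Rminus_0_r in *. rewrite Rabs_mult, Rabs_pos_eq by lra.
      apply Rmult_lt_reg_l with (/ B). apply Rinv_0_lt_compat; auto.
      rewrite <- Rmult_assoc, Rinv_l, Rmult_1_l by lra. unfold Rdiv in Hy. lra.
    + apply Rmult_lt_0_compat; auto.
  - destruct HR as [M0 HM]. exists (M0 / B). intros y Hy. apply HM.
    apply Rmult_lt_reg_l with (/ B). apply Rinv_0_lt_compat; auto.
    rewrite <- Rmult_assoc, Rinv_l, Rmult_1_l by lra. unfold Rdiv in Hy. lra.
  - intros x y Hx Hy. destruct (HQR _ _ Hx Hy) as [v [Hv Pv]]. exists v. split; auto.
    simpl. simpl in Hv.
    assert (Hv' : is_RInt g (B * x + 0) (B * y + 0) v) by (rewrite !Rplus_0_r; auto).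
    pose proof (is_RInt_comp_lin g B 0 x y v Hv') as Hc.
    revert Hc. apply is_RInt_ext. intros z _. rewrite Rplus_0_r. reflexivity.
Qed.

Lemma GI_proof c B : 0 < c -> 0 < B ->
  is_RInt_gen (fun t => Rpower t (c - 1) * exp (- (B * t))) (at_right 0) (Rbar_locally p_infty)
    (Gamma_fn c / Rpower B c).
Proof.
  intros Hc HB. destruct (G1 c Hc) as [H _].
  apply (gen_scale _ _ B HB) in H.
  apply (is_RInt_gen_scal _ (/ Rpower B c)) in H.
  replace (Gamma_fn c / Rpower B c) with (scal (/ Rpower B c) (Gamma_fn c))
    by (unfold scal; simpl; unfold mult; simpl; unfold Rdiv; ring).
  revert H. apply is_RInt_gen_ext. apply pos_filter_lt. intros t Ht.
  unfold scal; simpl; unfold mult; simpl. unfold gf.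
  rewrite <- Rpower_mult_distr by auto.
  assert (0 < Rpower B c) by apply exp_pos.
  replace (Rpower B c) with (B * Rpower B (c - 1)).
  2:{ rewrite <- (Rpower_1 B) at 1 by auto. rewrite <- Rpower_plus. f_equal. ring. }
  assert (0 < Rpower B (c - 1)) by apply exp_pos.
  field. split; lra.
Qed.

Lemma Rpower_lt_base t u c : 0 < t -> t < u -> 0 < c -> Rpower t c < Rpower u c.
Proof. intros Ht Htu Hc. unfold Rpower. apply exp_increasing. apply Rmult_lt_compat_l; auto. apply ln_increasing; auto. Qed.

Lemma G_rec_proof c : 0 < c -> Gamma_fn (c + 1) = c * Gamma_fn c.
Proof.
  intro Hc.
  set (F := fun t => - (Rpower t c * exp (- t))).
  set (h := fun t => Rpower t c * exp (- t) - c * (Rpower t (c - 1) * exp (- t))).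
  assert (HD : forall t, 0 < t -> is_derive F t (h t)).
  { intros t Ht. unfold F, h. 
    assert (E : Rpower t (c - 1) = Rpower t c / t).
    { replace (c - 1) with (c + - (1)) by ring. rewrite Rpower_plus, Rpower_Ropp, Rpower_1 by auto. reflexivity. }
    rewrite E. unfold Rpower. auto_derive. auto. field. lra. }
  assert (Hcont : forall x, 0 < x -> continuous (Derive F) x).
  { intros x Hx. apply (continuous_ext_loc _ h).
    - exists (mkposreal x Hx). intros y Hy. change (Rabs (y - x) < x) in Hy.
      symmetry. apply is_derive_unique. apply HD. apply Rabs_def2 in Hy. lra.
    - apply (@ex_derive_continuous R_AbsRing R_NormedModule). unfold h, Rpower. auto_derive. lra. }
  assert (Hl0 : filterlim F (at_right 0) (locally 0)).
  { apply filterlim_locally. intro eps.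
    set (d := Rmin 1 (Rpower eps (1 / c))).
    assert (Hd : 0 < d) by (unfold d; apply Rmin_glb_lt; [lra | apply exp_pos]).
    unfold at_right, within. exists (mkposreal d Hd). intros t Ht Ht0.
    change (Rabs (t - 0) < d) in Ht. rewrite Rminus_0_r, Rabs_pos_eq in Ht by lra.
    change (Rabs (F t - 0) < eps). unfold F. rewrite Rminus_0_r, Rabs_Ropp.
    rewrite Rabs_pos_eq by (left; apply Rmult_lt_0_compat; apply exp_pos).
    apply Rle_lt_trans with (Rpower t c).
    { rewrite <- (Rmult_1_r (Rpower t c)) at 2. apply Rmult_le_compat_l. left; apply exp_pos.
      rewrite <- exp_0. apply exp_le. lra. }
    apply Rlt_le_trans with (Rpower (Rpower eps (1 / c)) c).
    { apply Rpower_lt_base; auto. assert (d <= Rpower eps (1 / c)) by apply Rmin_r. lra. }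
    rewrite Rpower_mult. replace (1 / c * c) with 1 by (field; lra). rewrite Rpower_1. lra. apply cond_pos. }
  assert (Hlinf : filterlim F (Rbar_locally p_infty) (locally 0)).
  { apply filterlim_locally. intro eps. destruct (powbound c) as [K0 [HK0 Hb]].
    exists (Rmax 1 (-2 * ln (eps / K0))). intros t Ht.
    assert (H1 : 1 < t) by (eapply Rle_lt_trans; [apply Rmax_l | eauto]).
    assert (H2 : -2 * ln (eps / K0) < t) by (eapply Rle_lt_trans; [apply Rmax_r | eauto]).
    change (Rabs (F t - 0) < eps). unfold F. rewrite Rminus_0_r, Rabs_Ropp.
    rewrite Rabs_pos_eq by (left; apply Rmult_lt_0_compat; apply exp_pos).
    apply Rle_lt_trans with (K0 * exp (t / 2) * exp (- t)).
    { apply Rmult_le_compat_r. left; apply exp_pos. apply Hb; lra. }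
    rewrite Rmult_assoc, <- exp_plus. replace (t / 2 + - t) with (- t / 2) by field.
    assert (exp (- t / 2) < eps / K0).
    { rewrite <- (exp_ln (eps / K0)) by (apply Rdiv_lt_0_compat; [apply cond_pos | auto]).
      apply exp_increasing. lra. }
    apply Rmult_lt_compat_l with (r := K0) in H; auto.
    replace (K0 * (eps / K0)) with (pos eps) in H by (field; lra). lra. }
  pose proof (is_RInt_gen_Derive F 0 0
    (pos_filter_le _ (fun x Hx => ex_intro _ _ (HD x Hx)))
    (pos_filter_le _ Hcont) Hl0 Hlinf) as HR.
  assert (HR' : is_RInt_gen h (at_right 0) (Rbar_locally p_infty) 0).
  { rewrite Rminus_0_r in HR. revert HR. apply is_RInt_gen_ext. apply pos_filter_lt.
    intros t Ht. apply is_derive_unique. apply HD; auto. }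
  destruct (G1 c Hc) as [Hg _]. destruct (G1 (c + 1) ltac:(lra)) as [Hg1 _].
  pose proof (is_RInt_gen_minus _ _ _ _ Hg1 (is_RInt_gen_scal _ c _ Hg)) as Hm.
  assert (Hm' : is_RInt_gen h (at_right 0) (Rbar_locally p_infty) (Gamma_fn (c + 1) - c * Gamma_fn c)).
  { revert Hm. apply is_RInt_gen_ext. apply pos_filter_lt. intros t Ht.
    unfold h, gf, minus, plus, opp, scal; simpl; unfold mult; simpl.
    replace (c + 1 - 1) with c by ring. ring. }
  apply (@is_RInt_gen_unique R_CompleteNormedModule) in HR'. apply (@is_RInt_gen_unique R_CompleteNormedModule) in Hm'. lra. all: apply Proper_StrongProper; typeclasses eauto.
Qed.

Lemma G_pos c : 0 < c -> 0 < Gamma_fn c.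
Proof. intro H; exact (proj2 (G1 c H)). Qed.
Lemma G_rec c : 0 < c -> Gamma_fn (c + 1) = c * Gamma_fn c.
Proof. apply G_rec_proof. Qed.
Lemma GI c B : 0 < c -> 0 < B ->
  is_RInt_gen (fun t => Rpower t (c - 1) * exp (- (B * t))) (at_right 0) (Rbar_locally p_infty)
    (Gamma_fn c / Rpower B c).
Proof. apply GI_proof. Qed.



Lemma Rpower_gt0 x y : 0 < Rpower x y. Proof. apply exp_pos. Qed.

Lemma is_series_Rplus (a b : nat -> R) (la lb : R) : is_series a la -> is_series b lb ->
  is_series (fun n => a n + b n) (la + lb).
Proof. intros. apply (is_series_plus a b); auto. Qed.

Lemma is_series_Rscal (c : R) (a : nat -> R) (l : R) : is_series a l -> is_series (fun n => c * a n) (c * l).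
Proof. intros. apply (is_series_scal c a); auto. Qed.

Lemma is_series_ext' (a b : nat -> R) (l l' : R) : (forall n, a n = b n) -> l = l' -> is_series a l -> is_series b l'.
Proof. intros H <- Ha. apply (is_series_ext a); auto. Qed.

Lemma G_ratio_rf al k : 0 < al -> Gamma_fn (al + INR k) / Gamma_fn al = rf al k.
Proof.
  intro Ha. induction k.
  - simpl. rewrite Rplus_0_r. field. apply Rgt_not_eq, G_pos; auto.
  - simpl rf. rewrite <- IHk. rewrite S_INR, <- Rplus_assoc, G_rec.
    field. apply Rgt_not_eq, G_pos; auto.
    pose proof (pos_INR k); lra.
Qed.

Definition NB (al B mu : R) (k : nat) : R :=
  mu ^ k / INR (fact k) * (Gamma_fn (al + INR k) / Gamma_fn al)
  * (Rpower B al / Rpower (B + mu) (al + INR k)).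

Lemma Rpower_inv_base x y : 0 < x -> Rpower (/ x) y = / Rpower x y.
Proof. intro Hx. unfold Rpower. rewrite ln_Rinv by auto. rewrite <- exp_Ropp. f_equal. ring. Qed.

Lemma INR_fact_pos k : 0 < INR (fact k).
Proof. apply lt_0_INR, lt_O_fact. Qed.

Lemma NB_binom al B mu k : 0 < al -> 0 < B -> 0 <= mu ->
  NB al B mu k = rf al k / INR (fact k) * (mu / (B + mu)) ^ k * Rpower (1 - mu / (B + mu)) al.
Proof.
  intros Ha HB Hm. unfold NB. rewrite G_ratio_rf by auto.
  replace (1 - mu / (B + mu)) with (B * / (B + mu)) by (field; lra).
  rewrite <- Rpower_mult_distr by (try apply Rinv_0_lt_compat; lra).
  rewrite Rpower_inv_base by lra. rewrite Rpower_plus, Rpower_pow by lra.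
  unfold Rdiv. rewrite Rpow_mult_distr, pow_inv.
  assert (0 < Rpower (B + mu) al) by apply Rpower_gt0.
  assert ((B + mu) ^ k <> 0) by (apply pow_nonzero; lra).
  pose proof (INR_fact_pos k).
  field. repeat split; lra.
Qed.

Lemma NB0 al B mu : 0 < al -> 0 < B -> 0 <= mu -> is_series (NB al B mu) 1.
Proof.
  intros Ha HB Hm.
  assert (Hq : 0 <= mu / (B + mu) < 1).
  { split. apply Rdiv_le_0_compat; lra. apply Rmult_lt_reg_r with (B + mu). lra.
    unfold Rdiv. rewrite Rmult_assoc, Rinv_l by lra. lra. }
  pose proof (binom al _ Ha Hq) as Hb.
  apply (is_series_Rscal (Rpower (1 - mu / (B + mu)) al)) in Hb.
  revert Hb. apply is_series_ext'.
  - intro n. rewrite NB_binom by auto. ring.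
  - rewrite <- Rpower_plus. replace (al + - al) with 0 by ring. apply Rpower_O. lra.
Qed.

Lemma NB_shift al B mu k : 0 < al -> 0 < B -> 0 <= mu ->
  NB al B mu (S k) * INR (S k) = al * mu / B * NB (al + 1) B mu k.
Proof.
  intros Ha HB Hm. unfold NB.
  replace (al + INR (S k)) with (al + 1 + INR k) by (rewrite S_INR; ring).
  rewrite G_rec by auto. rewrite (Rpower_plus al 1 B), Rpower_1 by lra.
  change (fact (S k)) with (S k * fact k)%nat. rewrite mult_INR.
  simpl pow.
  assert (0 < Gamma_fn al) by (apply G_pos; auto).
  assert (0 < Rpower (B + mu) (al + 1 + INR k)) by apply Rpower_gt0.
  pose proof (INR_fact_pos k). pose proof (pos_INR k).
  rewrite S_INR. field. repeat split; lra.
Qed.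

Definition NBE1 al B mu := al * mu / B.
Definition NBE2 al B mu := al * mu / B * ((al + 1) * mu / B + 1).

Lemma NB1 al B mu : 0 < al -> 0 < B -> 0 <= mu ->
  is_series (fun k => NB al B mu k * INR k) (NBE1 al B mu).
Proof.
  intros Ha HB Hm. apply is_series_decr_1.
  pose proof (NB0 (al+1) B mu ltac:(lra) HB Hm) as H.
  apply (is_series_Rscal (al * mu / B)) in H. revert H. apply is_series_ext'.
  - intro n. rewrite NB_shift; auto.
  - unfold NBE1. simpl. change (plus (al * mu / B) (opp (NB al B mu 0 * 0))) with
      (al * mu / B + - (NB al B mu 0 * 0)). ring.
Qed.

Lemma NB2 al B mu : 0 < al -> 0 < B -> 0 <= mu ->
  is_series (fun k => NB al B mu k * (INR k * INR k)) (NBE2 al B mu).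
Proof.
  intros Ha HB Hm. apply is_series_decr_1.
  pose proof (NB0 (al+1) B mu ltac:(lra) HB Hm) as H0.
  pose proof (NB1 (al+1) B mu ltac:(lra) HB Hm) as H1.
  pose proof (is_series_Rplus _ _ _ _ H1 H0) as H.
  apply (is_series_Rscal (al * mu / B)) in H. revert H. apply is_series_ext'.
  - intro n. rewrite <- Rmult_assoc, NB_shift by auto. rewrite S_INR. ring.
  - unfold NBE1, NBE2. change (plus ?a (opp ?b)) with (a + - b). simpl. ring.
Qed.

Lemma NB_poly al B mu g l c0 c1 c2 : 0 < al -> 0 < B -> 0 <= mu ->
  (forall k, g k = NB al B mu k * (c0 + c1 * INR k + c2 * (INR k * INR k))) ->
  l = c0 + c1 * NBE1 al B mu + c2 * NBE2 al B mu -> is_series g l.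
Proof.
  intros Ha HB Hm Hg Hl.
  pose proof (is_series_Rscal c0 _ _ (NB0 al B mu Ha HB Hm)) as H0.
  pose proof (is_series_Rscal c1 _ _ (NB1 al B mu Ha HB Hm)) as H1.
  pose proof (is_series_Rscal c2 _ _ (NB2 al B mu Ha HB Hm)) as H2.
  pose proof (is_series_Rplus _ _ _ _ (is_series_Rplus _ _ _ _ H0 H1) H2) as H.
  revert H. apply is_series_ext'.
  - intro k. rewrite Hg. ring.
  - rewrite Hl. ring.
Qed.


Definition sy n (y : list nat) := fsum n (fun j => INR (nth j y 0%nat)).

Definition Pm n al B (mu : nat -> R) (y : list nat) : R :=
  fprod n (fun j => mu j ^ nth j y 0%nat / INR (fact (nth j y 0%nat)))
  * (Gamma_fn (al + sy n y) / Gamma_fn al)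
  * (Rpower B al / Rpower (B + fsum n mu) (al + sy n y)).

Lemma Pm_peel n al B mu k y : 0 < al -> 0 < B -> (forall j, 0 < mu j) ->
  Pm (S n) al B mu (k :: y) =
  NB al B (mu 0%nat) k * Pm n (al + INR k) (B + mu 0%nat) (fun j => mu (S j)) y.
Proof.
  intros Ha HB Hm. unfold Pm, NB, sy. rewrite fprod_Sl, !fsum_Sl. simpl nth.
  set (s := fsum n (fun j => INR (nth j y 0%nat))).
  set (M := fsum n (fun j => mu (S j))).
  set (Pr := fprod n _).
  rewrite <- !Rplus_assoc.
  assert (0 < Gamma_fn al) by (apply G_pos; auto).
  assert (0 < Gamma_fn (al + INR k)) by (apply G_pos; pose proof (pos_INR k); lra).
  assert (0 < Rpower (B + mu 0%nat) (al + INR k)) by apply Rpower_gt0.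
  assert (0 < Rpower (B + mu 0%nat + M) (al + INR k + s)) by apply Rpower_gt0.
  pose proof (INR_fact_pos k).
  field. repeat split; lra.
Qed.

Lemma is_msum_ext n (F G : list nat -> R) l : (forall y, F y = G y) -> is_msum n F l -> is_msum n G l.
Proof.
  revert F G l. induction n; intros F G l H; simpl.
  - rewrite H. auto.
  - intros [g [Hg Hs]]. exists g. split; auto. intro k. apply (IHn (fun ys => F (k :: ys))); auto.
Qed.

Lemma is_msum_scal n (F : list nat -> R) c l : is_msum n F l -> is_msum n (fun y => c * F y) (c * l).
Proof.
  revert F l. induction n; intros F l; simpl.
  - intros ->. auto.
  - intros [g [Hg Hs]]. exists (fun k => c * g k). split.
    + intro k. apply (IHn (fun ys => F (k :: ys))); auto.
    + apply is_series_Rscal; auto.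
Qed.

Lemma is_msum_plus n (F G : list nat -> R) l1 l2 : is_msum n F l1 -> is_msum n G l2 ->
  is_msum n (fun y => F y + G y) (l1 + l2).
Proof.
  revert F G l1 l2. induction n; intros F G l1 l2; simpl.
  - intros -> ->. auto.
  - intros [g [Hg Hs]] [h [Hh Ht]]. exists (fun k => g k + h k). split.
    + intro k. apply (IHn (fun ys => F (k :: ys)) (fun ys => G (k :: ys))); auto.
    + apply is_series_Rplus; auto.
Qed.

Lemma is_msum_val n (F : list nat -> R) l l' : l = l' -> is_msum n F l -> is_msum n F l'.
Proof. intros ->; auto. Qed.

Lemma is_series_zero : is_series (fun _ : nat => 0) 0.
Proof.
  pose proof (is_series_geom (1/2) ltac:(rewrite Rabs_pos_eq; lra)) as H.
  pose proof (is_series_scal 0 _ _ H) as H1.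
  apply (is_series_ext _ _ _ (fun n => Rmult_0_l _)) in H1.
  change (scal 0 (/ (1 - 1/2))) with (0 * / (1 - 1/2)) in H1. rewrite Rmult_0_l in H1. exact H1.
Qed.

Lemma is_msum_zero n : is_msum n (fun _ => 0) 0.
Proof.
  induction n; simpl. reflexivity.
  exists (fun _ => 0). split; auto. apply is_series_zero.
Qed.

Lemma is_msum_fsum n N (F : nat -> list nat -> R) (l : nat -> R) :
  (forall j, (j < N)%nat -> is_msum n (F j) (l j)) ->
  is_msum n (fun y => fsum N (fun j => F j y)) (fsum N l).
Proof.
  induction N; intros H.
  - apply (is_msum_ext n (fun _ => 0)). intro; reflexivity. apply is_msum_zero.
  - apply (is_msum_ext n (fun y => fsum N (fun j => F j y) + F N y)).
    intro; rewrite fsum_S; auto. rewrite fsum_S.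
    apply is_msum_plus; auto.
Qed.

Lemma inner_scal n (F G : list nat -> R) c l l' : (forall y, F y = c * G y) -> l' = c * l ->
  is_msum n G l -> is_msum n F l'.
Proof.
  intros H -> HG. apply (is_msum_ext n (fun y => c * G y)). intro; auto.
  apply is_msum_scal; auto.
Qed.

Lemma inner_scal' n (F G : list nat -> R) c l l' : is_msum n G l -> (forall y, F y = c * G y) -> l' = c * l ->
  is_msum n F l'.
Proof. intros H1 H2 H3. eapply inner_scal; eauto. Qed.

Lemma moments n : forall al B mu, 0 < al -> 0 < B -> (forall j, 0 < mu j) ->
  is_msum n (Pm n al B mu) 1 /\
  (forall j, (j < n)%nat ->
     is_msum n (fun y => Pm n al B mu y * INR (nth j y 0%nat)) (al * mu j / B)) /\
  (forall j k, (j < n)%nat -> (k < n)%nat ->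
     is_msum n (fun y => Pm n al B mu y * INR (nth j y 0%nat) * INR (nth k y 0%nat))
       ((if Nat.eqb j k then al * mu j / B else 0) + al * (al + 1) * mu j * mu k / (B * B))).
Proof.
  induction n; intros al B mu Ha HB Hm.
  - split; [|split; intros; lia]. simpl. unfold Pm, sy. rewrite fsum_0, fprod_0, fsum_0, !Rplus_0_r.
    assert (0 < Gamma_fn al) by (apply G_pos; auto).
    assert (0 < Rpower B al) by apply Rpower_gt0. field. lra.
  -
    pose proof (Hm 0%nat) as Hm0. assert (Hm0' : 0 <= mu 0%nat) by lra.
    assert (Hak : forall k, 0 < al + INR k) by (intro k; pose proof (pos_INR k); lra).
    assert (HBm : 0 < B + mu 0%nat) by lra.
    assert (Hm' : forall j, 0 < mu (S j)) by auto.
    pose proof (fun k => IHn (al + INR k) (B + mu 0%nat) (fun j => mu (S j)) (Hak k) HBm Hm') as IH.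
    split; [|split].
    + exists (fun k => NB al B (mu 0%nat) k * 1). split.
      * intro k. apply (inner_scal' n _ _ (NB al B (mu 0%nat) k) _ _ (proj1 (IH k))).
        intro y. apply Pm_peel; auto. reflexivity.
      * apply (NB_poly al B (mu 0%nat) _ 1 1 0 0); auto; intros; try ring.
    + intros j Hj. destruct j as [|j].
      * exists (fun k => NB al B (mu 0%nat) k * INR k). split.
        -- intro k. apply (inner_scal' n _ _ (NB al B (mu 0%nat) k * INR k) _ _ (proj1 (IH k))).
           intro y. rewrite Pm_peel by auto. simpl nth. ring. ring.
        -- apply (NB_poly al B (mu 0%nat) _ _ 0 1 0); auto; intros; try ring.
           unfold NBE1. ring.
      * exists (fun k => NB al B (mu 0%nat) k * ((al + INR k) * mu (S j) / (B + mu 0%nat))). split.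
        -- intro k. apply (inner_scal' n _ _ (NB al B (mu 0%nat) k) _ _ (proj1 (proj2 (IH k)) j ltac:(lia))).
           intro y. rewrite Pm_peel by auto. simpl nth. ring. reflexivity.
        -- apply (NB_poly al B (mu 0%nat) _ _ (al * mu (S j) / (B + mu 0%nat)) (mu (S j) / (B + mu 0%nat)) 0); auto; intros.
           field. lra. unfold NBE1. field. lra.
    + intros j k Hj Hk. destruct j as [|j]; destruct k as [|k].
      * exists (fun k => NB al B (mu 0%nat) k * (INR k * INR k)). split.
        -- intro k. apply (inner_scal' n _ _ (NB al B (mu 0%nat) k * (INR k * INR k)) _ _ (proj1 (IH k))).
           intro y. rewrite Pm_peel by auto. simpl nth. ring. ring.
        -- apply (NB_poly al B (mu 0%nat) _ _ 0 0 1); auto; intros; try ring.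
           unfold NBE2. simpl. field. lra.
      * exists (fun k0 => NB al B (mu 0%nat) k0 * (INR k0 * ((al + INR k0) * mu (S k) / (B + mu 0%nat)))). split.
        -- intro k0. apply (inner_scal' n _ _ (NB al B (mu 0%nat) k0 * INR k0) _ _ (proj1 (proj2 (IH k0)) k ltac:(lia))).
           intro y. rewrite Pm_peel by auto. simpl nth. ring. ring.
        -- apply (NB_poly al B (mu 0%nat) _ _ 0 (al * mu (S k) / (B + mu 0%nat)) (mu (S k) / (B + mu 0%nat))); auto; intros.
           field. lra. unfold NBE1, NBE2. simpl. field. lra.
      * exists (fun k0 => NB al B (mu 0%nat) k0 * (INR k0 * ((al + INR k0) * mu (S j) / (B + mu 0%nat)))). split.
        -- intro k0. apply (inner_scal' n _ _ (NB al B (mu 0%nat) k0 * INR k0) _ _ (proj1 (proj2 (IH k0)) j ltac:(lia))).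
           intro y. rewrite Pm_peel by auto. simpl nth. ring. ring.
        -- apply (NB_poly al B (mu 0%nat) _ _ 0 (al * mu (S j) / (B + mu 0%nat)) (mu (S j) / (B + mu 0%nat))); auto; intros.
           field. lra. unfold NBE1, NBE2. simpl. field. lra.
      * set (d := if Nat.eqb j k then 1 else 0).
        assert (Hd : forall X, (if Nat.eqb j k then X else 0) = d * X) by (intro; unfold d; destruct (Nat.eqb j k); ring).
        exists (fun k0 => NB al B (mu 0%nat) k0 *
           (d * ((al + INR k0) * mu (S j) / (B + mu 0%nat)) +
            (al + INR k0) * (al + INR k0 + 1) * mu (S j) * mu (S k) / ((B + mu 0%nat) * (B + mu 0%nat)))). split.
        -- intro k0. apply (inner_scal' n _ _ (NB al B (mu 0%nat) k0) _ _ (proj2 (proj2 (IH k0)) j k ltac:(lia) ltac:(lia))).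
           intro y. rewrite Pm_peel by auto. simpl nth. ring. rewrite Hd. reflexivity.
        -- apply (NB_poly al B (mu 0%nat) _ _
              (d * (al * mu (S j) / (B + mu 0%nat)) + al * (al + 1) * mu (S j) * mu (S k) / ((B + mu 0%nat) * (B + mu 0%nat)))
              (d * (mu (S j) / (B + mu 0%nat)) + (2 * al + 1) * mu (S j) * mu (S k) / ((B + mu 0%nat) * (B + mu 0%nat)))
              (mu (S j) * mu (S k) / ((B + mu 0%nat) * (B + mu 0%nat)))); auto; intros.
           field. lra. simpl Nat.eqb. rewrite Hd. unfold NBE1, NBE2. field. lra.
Qed.

Lemma pos_filter : filter_prod (at_right 0) (Rbar_locally p_infty)
  (fun ab : R * R => forall x, Rmin (fst ab) (snd ab) < x < Rmax (fst ab) (snd ab) -> 0 < x).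
Proof.
  apply (Filter_prod _ _ _ (fun x => 0 < x) (fun y => 0 < y)).
  - unfold at_right, within. apply filter_forall. auto.
  - exists 0. auto.
  - intros u v Hu Hv z [Hz _]. simpl in Hz. assert (0 < Rmin u v) by (apply Rmin_glb_lt; auto). lra.
Qed.

Lemma CF k p m a b f x beta y : 0 < a -> 0 < b ->
  mixed_pmf k p m a b f x beta y = Pm m a b (fun j => exp (dotp p (f (x j)) beta)) y.
Proof.
  intros Ha Hb. unfold mixed_pmf, int0inf.
  set (mu := fun j => exp (dotp p (f (x j)) beta)).
  set (s := sy m y). set (M := fsum m mu).
  assert (Hs : 0 <= s) by (apply fsum_pos' ; intros; apply pos_INR).
  assert (HM : 0 <= M) by (apply fsum_pos'; intros; unfold mu; left; apply exp_pos).
  set (K := Rpower b a / Gamma_fn a * fprod m (fun j => mu j ^ nth j y 0%nat / INR (fact (nth j y 0%nat)))).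
  apply is_RInt_gen_unique.
  pose proof (GI (a + s) (b + M) ltac:(lra) ltac:(lra)) as H.
  apply (is_RInt_gen_scal _ K) in H.
  replace (Pm m a b mu y) with (scal K (Gamma_fn (a + s) / Rpower (b + M) (a + s))).
  2:{ unfold Pm, K, scal; simpl; unfold mult; simpl. fold s M.
      assert (0 < Gamma_fn a) by (apply G_pos; auto).
      assert (0 < Rpower (b + M) (a + s)) by apply Rpower_gt0. field. lra. }
  revert H. apply is_RInt_gen_ext.
  eapply filter_imp; [|exact pos_filter]. intros [u v] Hp t Ht. specialize (Hp t Ht). simpl in Hp.
  unfold scal; simpl; unfold mult; simpl.
  unfold gamma_dens, pois_pmf.
  rewrite (fprod_ext_lt m _ (fun j => exp (- t * mu j) * (Rpower t (INR (nth j y 0%nat)) *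
            (mu j ^ nth j y 0%nat / INR (fact (nth j y 0%nat)))))).
  2:{ intros j _. fold (mu j). rewrite Rpower_pow by auto. rewrite Rpow_mult_distr.
      replace (- (t * mu j)) with (- t * mu j) by ring. field. apply Rgt_not_eq, INR_fact_pos. }
  rewrite !fprod_mult, fprod_exp, fprod_Rpower by auto. rewrite fsum_scal. fold M.
  unfold K. fold s. replace (a + s - 1) with ((a - 1) + s) by ring. rewrite Rpower_plus.
  replace (- ((b + M) * t)) with (- b * t + - t * M) by ring. rewrite exp_plus. change (fsum m (fun j => INR (nth j y 0%nat))) with s. field.
  apply Rgt_not_eq, G_pos; auto.
Qed.

Lemma dotp_shift p u j t beta : dotp p u (shift j t beta) =
  dotp p u beta + t * fsum p (fun q => u q * (if Nat.eqb q j then 1 else 0)).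
Proof.
  unfold dotp. rewrite <- fsum_scal, <- fsum_plus. apply fsum_ext_lt. intros q _.
  unfold shift. destruct (Nat.eqb q j); ring.
Qed.

Lemma ln_Pm m a b mu y : 0 < a -> 0 < b -> (forall j, 0 < mu j) ->
  ln (Pm m a b mu y) = fsum m (fun l => INR (nth l y 0%nat) * ln (mu l) - ln (INR (fact (nth l y 0%nat))))
    + ln (Gamma_fn (a + sy m y) / Gamma_fn a) + ln (Rpower b a) - (a + sy m y) * ln (b + fsum m mu).
Proof.
  intros Ha Hb Hm. unfold Pm.
  assert (Hs : 0 <= sy m y) by (apply fsum_pos'; intros; apply pos_INR).
  assert (HM : 0 <= fsum m mu) by (apply fsum_pos'; intros; left; auto).
  assert (H1 : forall j, 0 < mu j ^ nth j y 0%nat / INR (fact (nth j y 0%nat))).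
  { intro j. apply Rdiv_lt_0_compat. apply pow_lt; auto. apply INR_fact_pos. }
  assert (0 < Gamma_fn (a + sy m y)) by (apply G_pos; lra).
  assert (0 < Gamma_fn a) by (apply G_pos; lra).
  rewrite !ln_mult; try apply Rdiv_lt_0_compat; try apply Rmult_lt_0_compat; try apply fprod_pos;
    try apply Rpower_gt0; auto.
  rewrite ln_fprod by auto. rewrite (ln_div (Rpower b a)) by apply Rpower_gt0.
  unfold Rpower at 2. rewrite ln_exp.
  rewrite (fsum_ext_lt m _ (fun l => INR (nth l y 0%nat) * ln (mu l) - ln (INR (fact (nth l y 0%nat))))).
  ring.
  intros j _. rewrite ln_div, ln_pow; auto. apply pow_lt; auto. apply INR_fact_pos. apply Rdiv_lt_0_compat; auto.
Qed.

Lemma is_derive_fsum n (F : nat -> R -> R) (F' : nat -> R) t :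
  (forall l, is_derive (F l) t (F' l)) ->
  is_derive (fun t => fsum n (fun l => F l t)) t (fsum n F').
Proof.
  intro H. induction n.
  - apply (is_derive_ext (fun _ => 0)). intro; reflexivity. apply (is_derive_const 0).
  - apply (is_derive_ext (fun t => fsum n (fun l => F l t) + F n t)).
    intro; rewrite fsum_S; auto. rewrite fsum_S. apply (is_derive_plus _ _ _ _ _ IHn (H n)).
Qed.

Lemma is_derive_val (f : R -> R) x l l' : is_derive f x l -> l = l' -> is_derive f x l'.
Proof. intros H <-; auto. Qed.

Lemma lin_deriv A dl gl c t : is_derive (fun t => A * (dl + t * gl) - c) t (A * gl).
Proof. auto_derive; auto. ring. Qed.
Lemma exp_deriv dl gl t : is_derive (fun t => exp (dl + t * gl)) t (gl * exp (dl + t * gl)).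
Proof. auto_derive; auto. ring. Qed.

Definition gsh p (u : nat -> R) j := fsum p (fun q => u q * (if Nat.eqb q j then 1 else 0)).

Lemma score_deriv k p m a b f x beta j y : 0 < a -> 0 < b ->
  is_derive (fun t => ln (mixed_pmf k p m a b f x (shift j t beta) y)) 0
   (fsum m (fun l => INR (nth l y 0%nat) * gsh p (f (x l)) j)
    - (a + sy m y) * (fsum m (fun l => gsh p (f (x l)) j * exp (dotp p (f (x l)) beta))
        / (b + fsum m (fun l => exp (dotp p (f (x l)) beta))))).
Proof.
  intros Ha Hb.
  set (d := fun l => dotp p (f (x l)) beta).
  set (g := fun l => gsh p (f (x l)) j).
  set (C := ln (Gamma_fn (a + sy m y) / Gamma_fn a) + ln (Rpower b a)).
  assert (Heq : forall t : R, fsum m (fun l => INR (nth l y 0%nat) * (d l + t * g l) - ln (INR (fact (nth l y 0%nat))))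
     + C - (a + sy m y) * ln (b + fsum m (fun l => exp (d l + t * g l))) =
     ln (mixed_pmf k p m a b f x (shift j t beta) y)).
  { intro t. rewrite CF by auto. rewrite ln_Pm by (auto; intros; apply exp_pos).
    rewrite (fsum_ext_lt m (fun l => INR (nth l y 0%nat) * ln (exp (dotp p (f (x l)) (shift j t beta))) - ln (INR (fact (nth l y 0%nat))))
       (fun l => INR (nth l y 0%nat) * (d l + t * g l) - ln (INR (fact (nth l y 0%nat))))).
    rewrite (fsum_ext_lt m (fun l => exp (dotp p (f (x l)) (shift j t beta))) (fun l => exp (d l + t * g l))).
    unfold C; ring.
    intros l _. rewrite dotp_shift. reflexivity.
    intros l _. rewrite ln_exp, dotp_shift. reflexivity. }
  apply (is_derive_ext _ _ _ _ Heq).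
  assert (HE : 0 < b + fsum m (fun l => exp (d l + 0 * g l))).
  { pose proof (fsum_pos' m (fun l => exp (d l + 0 * g l)) ltac:(intros; left; apply exp_pos)). lra. }
  assert (D1 : is_derive (fun t => fsum m (fun l => INR (nth l y 0%nat) * (d l + t * g l) - ln (INR (fact (nth l y 0%nat))))) 0
                 (fsum m (fun l => INR (nth l y 0%nat) * g l))).
  { apply is_derive_fsum. intro l. apply lin_deriv. }
  assert (D2 : is_derive (fun t => b + fsum m (fun l => exp (d l + t * g l))) 0
                 (fsum m (fun l => g l * exp (d l + 0 * g l)))).
  { pose proof (is_derive_fsum m (fun l t => exp (d l + t * g l)) (fun l => g l * exp (d l + 0 * g l)) 0
       (fun l => exp_deriv (d l) (g l) 0)) as Hf.
    pose proof (is_derive_plus (fun _ : R => b) (fun t => fsum m (fun l => exp (d l + t * g l))) 0 _ _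
       (is_derive_const b 0) Hf) as H2.
    simpl in H2. unfold plus, zero in H2; simpl in H2. rewrite Rplus_0_l in H2. exact H2. }
  pose proof (is_derive_comp ln _ 0 _ _ (is_derive_ln _ HE) D2) as D3.
  pose proof (is_derive_scal _ _ (a + sy m y) _ D3) as D4.
  pose proof (is_derive_plus _ _ _ _ _ D1 (is_derive_const C 0)) as D5.
  pose proof (is_derive_minus _ _ _ _ _ D5 D4) as D6.
  eapply is_derive_val; [exact D6|].
  change (fsum m (fun l => INR (nth l y 0%nat) * g l) + 0 -
     (a + sy m y) * (fsum m (fun l => g l * exp (d l + 0 * g l)) * / (b + fsum m (fun l => exp (d l + 0 * g l))))
     = fsum m (fun l => INR (nth l y 0%nat) * g l) -
        (a + sy m y) * (fsum m (fun l => g l * exp (d l)) / (b + fsum m (fun l => exp (d l))))).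
  rewrite (fsum_ext_lt m (fun l => g l * exp (d l + 0 * g l)) (fun l => g l * exp (d l))).
  rewrite (fsum_ext_lt m (fun l => exp (d l + 0 * g l)) (fun l => exp (d l))).
  unfold Rdiv. ring.
  all: intros l _; rewrite Rmult_0_l, Rplus_0_r; reflexivity.
Qed.

Lemma gsh_lt p u i : (i < p)%nat -> gsh p u i = u i.
Proof.
  intro H. unfold gsh. rewrite <- (fsum_delta p i u H). apply fsum_ext_lt. intros q _.
  destruct (Nat.eqb q i); ring.
Qed.

Lemma fsum_prod n n' F G : fsum n F * fsum n' G = fsum n (fun q => fsum n' (fun r => F q * G r)).
Proof.
  assert (E : forall c H, fsum n (fun j => H j * c) = fsum n H * c).
  { intros c H. rewrite Rmult_comm, <- (fsum_scal n c H). apply fsum_ext_lt; intros; ring. }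
  rewrite <- E. apply fsum_ext_lt. intros q _.
  rewrite <- (fsum_scal n' (F q) G). reflexivity.
Qed.

Lemma score_eq k p m a b f x beta i y : 0 < a -> 0 < b -> (i < p)%nat ->
  score k p m a b f x beta i y =
  fsum m (fun q => INR (nth q y 0%nat) * (f (x q) i -
     fsum m (fun r => f (x r) i * exp (dotp p (f (x r)) beta)) / (b + fsum m (fun r => exp (dotp p (f (x r)) beta)))))
  - a * (fsum m (fun r => f (x r) i * exp (dotp p (f (x r)) beta)) / (b + fsum m (fun r => exp (dotp p (f (x r)) beta)))).
Proof.
  intros Ha Hb Hi. unfold score. rewrite (is_derive_unique (fun t : R => ln (mixed_pmf k p m a b f x (shift i t beta) y)) 0 _ (score_deriv k p m a b f x beta i y Ha Hb)).
  rewrite (fsum_ext_lt m (fun l => INR (nth l y 0%nat) * gsh p (f (x l)) i) (fun l => INR (nth l y 0%nat) * f (x l) i)).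
  rewrite (fsum_ext_lt m (fun l => gsh p (f (x l)) i * exp (dotp p (f (x l)) beta)) (fun l => f (x l) i * exp (dotp p (f (x l)) beta))).
  set (c := fsum m (fun r => f (x r) i * exp (dotp p (f (x r)) beta)) / (b + fsum m (fun r => exp (dotp p (f (x r)) beta)))).
  unfold sy. rewrite (fsum_ext_lt m (fun q => INR (nth q y 0%nat) * (f (x q) i - c))
     (fun q => INR (nth q y 0%nat) * f (x q) i - c * INR (nth q y 0%nat))).
  rewrite fsum_minus, fsum_scal. unfold c, Rdiv. ring.
  intros; ring.
  all: intros q _; rewrite gsh_lt; auto.
Qed.

Theorem theorem2 (k p m : nat) (a b : R) (f : Rk k -> nat -> R)
    (x : nat -> Rk k) (beta : nat -> R) :
  (0 < p)%nat -> 0 < a -> 0 < b ->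
  (forall z : Rk k, f z 0%nat = 1) ->
  forall i l : nat, (i < p)%nat -> (l < p)%nat ->
    (forall (j : nat) (y : list nat), length y = m ->
       ex_derive (fun t => ln (mixed_pmf k p m a b f x (shift j t beta) y)) 0) /\
    is_msum m
      (fun y => mixed_pmf k p m a b f x beta y
                * score k p m a b f x beta i y * score k p m a b f x beta l y)
      (a / b * (I_Po k p m f x beta i l
                - I_Po k p m f x beta i 0 * I_Po k p m f x beta 0 l
                  / (I_Po k p m f x beta 0 0 + b))).
Proof.
  intros Hp Ha Hb Hf0 i l Hi Hl. split.
  { intros j y _. eexists. apply score_deriv; auto. }
  set (mu := fun q => exp (dotp p (f (x q)) beta)).
  set (M := fsum m mu).
  set (A := fsum m (fun r => f (x r) i * mu r)).
  set (A' := fsum m (fun r => f (x r) l * mu r)).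
  set (c := A / (b + M)). set (c' := A' / (b + M)).
  set (U := fun q => f (x q) i - c). set (V := fun q => f (x q) l - c').
  assert (HM : 0 <= M) by (apply fsum_pos'; intros; left; apply exp_pos).
  assert (Hmu : forall j, 0 < mu j) by (intros; apply exp_pos).
  destruct (moments m a b mu Ha Hb Hmu) as [H0 [H1 H2]].
  apply (is_msum_ext m (fun y =>
     fsum m (fun q => fsum m (fun r => U q * V r * (Pm m a b mu y * INR (nth q y 0%nat) * INR (nth r y 0%nat))))
     + (- (a * c')) * fsum m (fun q => U q * (Pm m a b mu y * INR (nth q y 0%nat)))
     + (- (a * c)) * fsum m (fun r => V r * (Pm m a b mu y * INR (nth r y 0%nat)))
     + (a * a * c * c') * Pm m a b mu y)).
  { intro y. rewrite CF, !score_eq by auto.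
    change (fsum m (fun r => f (x r) i * exp (dotp p (f (x r)) beta))) with A.
    change (fsum m (fun r => f (x r) l * exp (dotp p (f (x r)) beta))) with A'.
    change (fsum m (fun r => exp (dotp p (f (x r)) beta))) with M.
    fold c c'. fold mu.
    change (fsum m (fun q => INR (nth q y 0%nat) * (f (x q) i - c))) with (fsum m (fun q => INR (nth q y 0%nat) * U q)).
    change (fsum m (fun q => INR (nth q y 0%nat) * (f (x q) l - c'))) with (fsum m (fun q => INR (nth q y 0%nat) * V q)).
    set (P := Pm m a b mu y).
    assert (E1 : fsum m (fun q => fsum m (fun r => U q * V r * (P * INR (nth q y 0%nat) * INR (nth r y 0%nat))))
               = P * (fsum m (fun q => INR (nth q y 0%nat) * U q) * fsum m (fun q => INR (nth q y 0%nat) * V q))).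
    { rewrite fsum_prod, <- fsum_scal. apply fsum_ext_lt. intros q _. rewrite <- fsum_scal.
      apply fsum_ext_lt. intros; ring. }
    assert (E2 : forall W, fsum m (fun q => W q * (P * INR (nth q y 0%nat))) = P * fsum m (fun q => INR (nth q y 0%nat) * W q)).
    { intro W. rewrite <- fsum_scal. apply fsum_ext_lt. intros; ring. }
    rewrite E1, !E2. ring. }
  apply (is_msum_val m _ (
     fsum m (fun q => fsum m (fun r => U q * V r * ((if Nat.eqb q r then a * mu q / b else 0) + a * (a + 1) * mu q * mu r / (b * b))))
     + (- (a * c')) * fsum m (fun q => U q * (a * mu q / b))
     + (- (a * c)) * fsum m (fun r => V r * (a * mu r / b))
     + (a * a * c * c') * 1)).
  2:{ repeat apply is_msum_plus; try apply is_msum_scal; auto.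
      - apply is_msum_fsum. intros q Hq. apply is_msum_fsum. intros r Hr.
        apply is_msum_scal. apply H2; auto.
      - apply is_msum_fsum. intros q Hq. apply is_msum_scal. apply H1; auto.
      - apply is_msum_fsum. intros q Hq. apply is_msum_scal. apply H1; auto. }
  set (SU := fsum m (fun q => mu q * U q)). set (SV := fsum m (fun q => mu q * V q)).
  set (I := fsum m (fun q => mu q * f (x q) i * f (x q) l)).
  assert (EW : fsum m (fun q => fsum m (fun r => U q * V r * ((if Nat.eqb q r then a * mu q / b else 0) + a * (a + 1) * mu q * mu r / (b * b))))
     = fsum m (fun q => U q * V q * (a * mu q / b)) + a * (a + 1) / (b * b) * SU * SV).
  { rewrite (fsum_ext_lt m _ (fun q => U q * V q * (a * mu q / b) + a * (a + 1) / (b * b) * SV * (mu q * U q))).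
    rewrite fsum_plus, fsum_scal. unfold SU. ring.
    intros q Hq. rewrite (fsum_ext_lt m _ (fun r => (if Nat.eqb r q then U q * V r * (a * mu q / b) else 0)
         + (a * (a + 1) / (b * b) * (mu q * U q)) * (mu r * V r))).
    rewrite fsum_plus, fsum_scal, fsum_delta by auto. unfold SV. ring.
    intros r _. rewrite Nat.eqb_sym. destruct (Nat.eqb r q); field; lra. }
  assert (ESU : SU = A - c * M).
  { unfold SU, A, M. rewrite <- fsum_scal, <- fsum_minus. apply fsum_ext_lt. intros; unfold U; ring. }
  assert (ESV : SV = A' - c' * M).
  { unfold SV, A', M. rewrite <- fsum_scal, <- fsum_minus. apply fsum_ext_lt. intros; unfold V; ring. }
  assert (EUV : fsum m (fun q => U q * V q * (a * mu q / b)) = a / b * (I - c * A' - c' * A + c * c' * M)).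
  { rewrite (fsum_ext_lt m _ (fun q => a / b * (mu q * f (x q) i * f (x q) l - c * (f (x q) l * mu q)
        - c' * (f (x q) i * mu q) + c * c' * mu q))).
    rewrite fsum_scal, !fsum_plus, !fsum_minus, !fsum_scal. reflexivity.
    intros; unfold U, V; field; lra. }
  assert (EU : fsum m (fun q => U q * (a * mu q / b)) = a / b * SU).
  { unfold SU. rewrite <- fsum_scal. apply fsum_ext_lt. intros; field; lra. }
  assert (EV : fsum m (fun q => V q * (a * mu q / b)) = a / b * SV).
  { unfold SV. rewrite <- fsum_scal. apply fsum_ext_lt. intros; field; lra. }
  rewrite EW, EUV, EU, EV, ESU, ESV.
  assert (I1 : I_Po k p m f x beta i l = I) by reflexivity.
  assert (I2 : I_Po k p m f x beta i 0 = A).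
  { unfold I_Po, A. apply fsum_ext_lt. intros. rewrite Hf0. fold (mu j). ring. }
  assert (I3 : I_Po k p m f x beta 0 l = A').
  { unfold I_Po, A'. apply fsum_ext_lt. intros. rewrite Hf0. fold (mu j). ring. }
  assert (I4 : I_Po k p m f x beta 0 0 = M).
  { unfold I_Po, M. apply fsum_ext_lt. intros. rewrite Hf0. fold (mu j). ring. }
  rewrite I1, I2, I3, I4. unfold c, c'. field. lra.
Qed.
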